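(* Let $(X,d)$ be a separable metric space admitting a weak convergence, and let $p\ge 1$. For any $\mu\in\mathcal{P}_{p-1}(X)$, the set $M_p(\mu)$ is non-empty and $d$-compact.
   Context: A convergence $c$ on a set $X$ is a rule assigning at most one point of $X$ as the ''limit'' of each sequence in $X$, such that whenever a sequence has limit $x$, every subsequence also has limit $x$. A convergence $w$ on $X$ is a weak convergence for $(X,d)$ if: (W1) whenever $\sup_n d(x_n,y)<\infty$ for some $y$, some subsequence converges in $w$ to some point of $X$; (W2) whenever $x_n\to x$ in $w$, $d(x,y)\le\liminf_n d(x_n,y)$ for all $y\in X$; (W3) whenever $x_n\to x$ in $w$ and $d(x_n,y)\to d(x,y)$ for some $y\in X$, then $d(x_n,x)\to0$. $(X,d)$ admits a weak convergence if such a $w$ exists. $\mathcal{P}_{p-1}(X)$ is the set of Borel probability measures $\mu$ on $(X,d)$ with $\int_X d^{p-1}(x,y)\,d\mu(y)<\infty$ for some (equivalently all) $x\in X$. For such $\mu$, $W_p(\mu,x,x'):=\int_X (d^p(x,y)-d^p(x',y))\,d\mu(y)$ and $M_p(\mu):=\{x\in X: W_p(\mu,x,x')\le 0 \text{ for all } x'\in X\}$. *)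

(* Defs.v *)
From HB Require Import structures.
From mathcomp Require Import all_boot all_order all_algebra.
From mathcomp Require Import all_classical all_reals all_analysis.
Set Implicit Arguments. Unset Strict Implicit. Unset Printing Implicit Defensive.
Import Order.TTheory GRing.Theory Num.Theory numFieldNormedType.Exports.
Local Open Scope classical_set_scope.
Local Open Scope ring_scope.

Section MetricDefs.
Variables (R : realType) (X : pointedType) (d : X -> X -> R).

Definition is_metric : Prop :=
  [/\ (forall x y, 0 <= d x y),
      (forall x y, d x y = 0 <-> x = y),
      (forall x y, d x y = d y x) &
      (forall x y z, d x z <= d x y + d y z)].

Definition dball (x : X) (r : R) : set X := [set y | d x y < r].

Definition d_open (U : set X) : Prop :=
  forall x, U x -> exists2 r : R, 0 < r & dball x r `<=` U.

Definition d_compact (K : set X) : Prop :=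
  forall (I : Type) (U : I -> set X),
    (forall i, d_open (U i)) -> K `<=` \bigcup_i U i ->
    exists2 F : set I, finite_set F & K `<=` \bigcup_(i in F) U i.

Definition d_separable : Prop :=
  exists D : set X, countable D /\
    forall x (e : R), 0 < e -> exists2 y, D y & d x y < e.

Definition is_convergence (c : (nat -> X) -> X -> Prop) : Prop :=
  (forall u x y, c u x -> c u y -> x = y) /\
  (forall u x (phi : nat -> nat), {homo phi : n m / (n < m)%N} ->
      c u x -> c (u \o phi) x).

Definition is_weak_convergence (w : (nat -> X) -> X -> Prop) : Prop :=
  [/\ is_convergence w,
      (* W1 *)
      (forall u : nat -> X, (exists y, exists M : R, forall n, d (u n) y <= M) ->
         exists (phi : nat -> nat) (x : X),
           {homo phi : n m / (n < m)%N} /\ w (u \o phi) x),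
      (* W2 *)
      (forall u x, w u x -> forall y,
         ((d x y)%:E <= limn_einf (fun n => (d (u n) y)%:E))%E) &
      (* W3 *)
      (forall u x, w u x ->
         (exists y, (fun n => d (u n) y) @ \oo --> (d x y : R)) ->
         (fun n => d (u n) x) @ \oo --> (0 : R))].

Definition admits_weak_convergence : Prop :=
  exists w, is_weak_convergence w.

Definition borel_d := g_sigma_algebraType d_open.

Definition finite_moment (q : R) (mu : probability borel_d R) : Prop :=
  exists x : X, (\int[mu]_y ((d x y) `^ q)%:E < +oo)%E.

Definition Wp (p : R) (mu : probability borel_d R) (x x' : X) : \bar R :=
  (\int[mu]_y ((d x y) `^ p - (d x' y) `^ p)%:E)%E.

Definition Mp (p : R) (mu : probability borel_d R) : set X :=
  [set x | forall x', (Wp p mu x x' <= 0)%E].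

End MetricDefs.

Arguments finite_moment {R X} d q mu.
Arguments Wp {R X} d p mu x x'.
Arguments Mp {R X} d p mu _.

(* Main.v *)
Require Import Defs.
From HB Require Import structures.
From mathcomp Require Import all_boot all_order all_algebra.
From mathcomp Require Import all_classical all_reals all_analysis.
From mathcomp Require Import ring lra measurable_realfun.
Import Order.TTheory GRing.Theory Num.Theory numFieldNormedType.Exports.
Local Open Scope classical_set_scope.
Local Open Scope ring_scope.
Set Implicit Arguments. Unset Strict Implicit.

Section PowLemmas.
Variable R : realType.
Implicit Types u v p : R.

Lemma pow_diff_le p u v : 1 <= p -> 0 <= u -> u <= v ->
  v `^ p - u `^ p <= 2 * p * (v - u) * v `^ (p - 1).
Proof.
move=> p1 u0 uv.
have p0 : 0 < p by lra.
have v0 : 0 <= v by lra.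
have vp : v `^ p = v * v `^ (p - 1) by rewrite mulr_powRB1.
have q0 : 0 <= v `^ (p - 1) by apply: powR_ge0.
have [uv2|uv2] := leP u (v / 2).
  have up : 0 <= u `^ p by apply: powR_ge0.
  rewrite vp.
  have : v <= 2 * (v - u) by lra.
  move=> h.
  have h2 : v * v `^ (p - 1) <= 2 * (v - u) * v `^ (p - 1) by apply: ler_wpM2r.
  have h3 : 2 * (v - u) * v `^ (p - 1) <= 2 * p * (v - u) * v `^ (p - 1).
    apply: ler_wpM2r => //.
    rewrite -mulrA [p * _]mulrC mulrA.
    have : 0 <= 2 * (v - u) by lra.
    move=> h4; rewrite -[X in X <= _]mulr1; apply: ler_wpM2l => //.
  lra.
have u0' : 0 < u by lra.
have v0' : 0 < v by lra.
have uE : u `^ p = v `^ p * expR (p * (ln u - ln v)).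
  rewrite /powR (gt_eqF u0') (gt_eqF v0') -expRD; congr expR.
  rewrite mulrBr; ring.
have lnb : ln v - ln u <= (v - u) / u.
  rewrite -ln_div ?posrE //.
  have -> : v / u = 1 + (v - u) / u by field; lra.
  apply: le_ln1Dx.
  have : 0 <= (v - u) / u by apply: divr_ge0; lra.
  lra.
have b2 : (v - u) / u <= 2 * (v - u) / v.
  rewrite ler_pdivrMr // mulrAC ler_pdivlMr //.
  have : 0 <= v - u by lra.
  move=> h; nra.
have e1 : 1 - p * (2 * (v - u) / v) <= expR (p * (ln u - ln v)).
  apply: le_trans (expR_ge1Dx _).
  have : p * (ln v - ln u) <= p * (2 * (v - u) / v).
    by apply: ler_wpM2l; lra.
  lra.
have vpg : 0 <= v `^ p by apply: powR_ge0.
have : v `^ p * (1 - p * (2 * (v - u) / v)) <= u `^ p.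
  by rewrite uE; apply: ler_wpM2l.
have -> : v `^ p * (1 - p * (2 * (v - u) / v)) =
  v `^ p - 2 * p * (v - u) * v `^ (p - 1).
  rewrite vp; field; lra.
lra.
Qed.

Lemma powR_superadd p a e : 1 <= p -> 0 <= a -> 0 <= e ->
  a `^ p + e `^ p <= (a + e) `^ p.
Proof.
move=> p1 a0 e0.
have p0 : 0 < p by lra.
rewrite -(mulr_powRB1 a0 p0) -(mulr_powRB1 e0 p0) -(@mulr_powRB1 _ (a + e)) //; last lra.
rewrite mulrDl; apply: lerD; apply: ler_wpM2l => //;
  apply: ge0_ler_powR; rewrite ?nnegrE; lra.
Qed.

End PowLemmas.

Section Setup.
Variables (R : realType) (X : pointedType) (d : X -> X -> R).
Hypothesis hd : is_metric d.
Local Notation T := (borel_d d).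

Lemma d_ge0 x y : 0 <= d x y. Proof. by case: hd. Qed.
Lemma d_sym x y : d x y = d y x. Proof. by case: hd. Qed.
Lemma d_tri x y z : d x z <= d x y + d y z. Proof. by case: hd. Qed.
Lemma d_xx x : d x x = 0. Proof. by case: hd => _ h _ _; apply: (proj2 (h x x)). Qed.
Lemma d_eq0 x y : d x y = 0 -> x = y. Proof. by case: hd => _ h _ _; apply: (proj1 (h x y)). Qed.

Lemma d_open_meas (U : set T) : d_open d U -> measurable U.
Proof. by move=> h; apply: sub_sigma_algebra. Qed.

Lemma d_meas x : measurable_fun setT (fun y : T => d x y).
Proof.
apply: (measurability _ (RGenOInfty.measurableE R)) => //.
move=> _ [_ [r ->] <-]; rewrite setTI; apply: d_open_meas => y /=.
rewrite in_itv /= andbT => ry.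
exists (d x y - r); first by rewrite subr_gt0.
move=> z /=; rewrite /dball /= => yz; rewrite in_itv /= andbT.
have := d_tri x z y; rewrite (d_sym z y); lra.
Qed.

End Setup.

Section Integ.
Variables (R : realType) (X : pointedType) (d : X -> X -> R).
Hypothesis hd : is_metric d.
Local Notation T := (borel_d d).
Variable p : R. Hypothesis hp : 1 <= p.
Variable mu : probability T R.
Variable x0 : X.
Hypothesis hx0 : (\int[mu]_y ((d x0 y) `^ (p-1))%:E < +oo)%E.

Definition gf x (y : T) := d x y `^ p - d x0 y `^ p.
Definition mom (y : T) := d x0 y `^ (p - 1).
Definition FF x := (\int[mu]_y (gf x y)%:E)%E.

Lemma mul4_ge0 (a b c e : R) : 0 <= a -> 0 <= b -> 0 <= c -> 0 <= e -> 0 <= a * b * c * e.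
Proof. by move=> *; rewrite !mulr_ge0. Qed.

Lemma meas_pow x q : measurable_fun setT (fun y : T => d x y `^ q).
Proof. by apply: (measurableT_comp (measurable_powR q)); apply: d_meas. Qed.

Lemma meas_gf x : measurable_fun setT (gf x).
Proof. by apply: measurable_funB; apply: meas_pow. Qed.

Lemma meas_mom : measurable_fun setT mom.
Proof. exact: meas_pow. Qed.

Lemma int_mom : mu.-integrable setT (fun y => (mom y)%:E).
Proof.
apply/integrableP; split; first by apply/measurable_EFinP; exact: meas_mom.
rewrite (eq_integral (fun y => (mom y)%:E)); first exact: hx0.
by move=> y _; rewrite gee0_abs // lee_fin; apply: powR_ge0.
Qed.

Lemma mom_ge0 y : 0 <= mom y. Proof. exact: powR_ge0. Qed.

Lemma gf_lb x y : - (2 * p * d x x0 * mom y) <= gf x y.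
Proof.
have hp1 : 1 <= p by [].
rewrite /gf /mom.
set a := d x y; set b := d x0 y; set c := d x x0.
have a0 : 0 <= a by apply: d_ge0.
have b0 : 0 <= b by apply: d_ge0.
have c0 : 0 <= c by apply: d_ge0.
have q0 : 0 <= b `^ (p - 1) by apply: powR_ge0.
have K0 : 0 <= 2 * p * c * b `^ (p - 1).
  by apply: mul4_ge0 => //; lra.
have [ba|ab] := leP b a.
  have : b `^ p <= a `^ p by apply: ge0_ler_powR; rewrite ?nnegrE //; lra.
  lra.
have := @pow_diff_le _ p a b hp a0 (ltW ab).
have bac : b - a <= c.
  have := d_tri hd x0 x y; rewrite /b /a /c (d_sym hd x0 x); lra.
have : 2 * p * (b - a) * b `^ (p - 1) <= 2 * p * c * b `^ (p - 1).
  apply: ler_wpM2r => //; apply: ler_wpM2l => //; lra.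
lra.
Qed.

Lemma gf_ub x y : gf x y <= 2 * p * d x x0 * (d x0 y + d x x0) `^ (p - 1).
Proof.
have hp1 : 1 <= p by [].
rewrite /gf.
set a := d x y; set b := d x0 y; set c := d x x0.
have a0 : 0 <= a by apply: d_ge0.
have b0 : 0 <= b by apply: d_ge0.
have c0 : 0 <= c by apply: d_ge0.
have q0 : 0 <= (b + c) `^ (p - 1) by apply: powR_ge0.
have K0 : 0 <= 2 * p * c * (b + c) `^ (p - 1).
  by apply: mul4_ge0 => //; lra.
have [ab|ba] := leP a b.
  have : a `^ p <= b `^ p by apply: ge0_ler_powR; rewrite ?nnegrE //; lra.
  lra.
have := @pow_diff_le _ p b a hp b0 (ltW ba).
have abc : a <= b + c.
  have := d_tri hd x x0 y; rewrite /b /a /c; lra.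
have : 2 * p * (a - b) * a `^ (p - 1) <= 2 * p * c * (b + c) `^ (p - 1).
  apply: ler_pM => //.
  - apply: mulr_ge0; [apply: mulr_ge0|]; lra.
  - exact: powR_ge0.
  - apply: ler_wpM2l; lra.
  - apply: ge0_ler_powR; rewrite ?nnegrE; lra.
lra.
Qed.

Lemma sum_pow (q b c : R) : 0 <= q -> 0 <= b -> 0 <= c ->
  (b + c) `^ q <= 2 `^ q * (b `^ q + c `^ q).
Proof.
move=> q0 b0 c0.
have bq := powR_ge0 b q; have cq := powR_ge0 c q.
have tq : 0 <= (2:R) `^ q := powR_ge0 _ _.
wlog bc : b c b0 c0 bq cq / c <= b.
  move=> h; have [cb|bc] := leP c b; first exact: h.
  by rewrite addrC [b `^ q + _]addrC; apply: h => //; apply: ltW.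
have : (b + c) `^ q <= (2 * b) `^ q by apply: ge0_ler_powR; rewrite ?nnegrE; lra.
rewrite powRM //.
move=> h; apply: (le_trans h); apply: ler_wpM2l => //; lra.
Qed.

Lemma two_pow_ge1 (q : R) : 0 <= q -> 1 <= 2 `^ q.
Proof.
move=> q0; have h : (1:R) <= 2 by lra.
have := ler_powR h q0; by rewrite powRr0.
Qed.

Lemma int_gf x : mu.-integrable setT (fun y => (gf x y)%:E).
Proof.
have hp1 : 1 <= p by [].
set c := d x x0.
have c0 : 0 <= c by apply: d_ge0.
have p1 : 0 <= p - 1 by lra.
set K := 2 * p * c * 2 `^ (p - 1).
have K0 : 0 <= K.
  by apply: mulr_ge0; [apply: mulr_ge0|apply: powR_ge0]; [|]; try lra;
     apply: mulr_ge0; lra.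
apply: (@le_integrable _ _ _ mu setT measurableT _
   (fun y => (K * (mom y + c `^ (p - 1)))%:E)).
- by apply/measurable_EFinP; exact: meas_gf.
- move=> y _ /=; rewrite lee_fin [X in _ <= X]ger0_norm; last first.
    by apply: mulr_ge0 => //; apply: addr_ge0; [apply: mom_ge0|apply: powR_ge0].
  have e : K * (mom y + c `^ (p - 1)) =
     (2 * p * c) * (2 `^ (p - 1) * (mom y + c `^ (p - 1))) by rewrite /K !mulrA.
  have pc0 : 0 <= 2 * p * c by apply: mulr_ge0 => //; lra.
  rewrite e real_ler_norml ?num_real //; apply/andP; split.
  + have := gf_lb x y; rewrite -/c => h.
    rewrite lerNl; apply: le_trans (_ : _ <= 2 * p * c * mom y) _; first lra.
    apply: ler_wpM2l => //.
    have := two_pow_ge1 p1; have := mom_ge0 y; have := powR_ge0 c (p - 1).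
    move=> h1 h2 h3; nra.
  + apply: (le_trans (gf_ub x y)); rewrite -/c.
    apply: ler_wpM2l => //.
    exact: sum_pow (d_ge0 hd _ _) c0.
- have h := integrableZl measurableT K (integrableD measurableT int_mom
     (finite_measure_integrable_cst mu (c `^ (p - 1)) measurableT)).
  apply: (eq_integrable measurableT _ _ _ h) => y _ /=.
  by rewrite -EFinD -EFinM.
Qed.

Lemma FF_fin x : FF x \is a fin_num.
Proof. rewrite /FF; apply: (integrable_fin_num measurableT); exact: int_gf. Qed.

Lemma FF0 : FF x0 = 0%E.
Proof.
rewrite /FF /gf; rewrite (eq_integral (fun y => (cst 0%R y)%:E)); first exact: integral0.
by move=> y _; rewrite subrr.
Qed.

Lemma Wp_FF x x' : Wp d p mu x x' = (FF x - FF x')%E.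
Proof.
rewrite /Wp /FF -integralB_EFin //; [|exact: int_gf|exact: int_gf].
by apply: eq_integral => y _; rewrite /gf -EFinB; congr EFin; ring.
Qed.

End Integ.

Section Liminf.
Variable R : realType.
Local Open Scope ereal_scope.
Implicit Types u : (\bar R)^nat.

Lemma limn_einfE u : limn_einf u = ereal_sup (range (einfs u)).
Proof. by rewrite limn_einf_lim; apply/cvg_lim => //; exact: cvg_einfs_sup. Qed.

Lemma LI_ge u c : (exists N, forall n, (N <= n)%N -> c <= u n) -> c <= limn_einf u.
Proof.
move=> [N hN]; rewrite limn_einfE.
apply: le_trans (_ : einfs u N <= _); last by apply: ereal_sup_ubound; exists N.
apply: le_ereal_inf_tmp => _ [k /= Nk <-]; exact: hN.
Qed.

Lemma LI_gt u c : c < limn_einf u -> exists N, forall n, (N <= n)%N -> c < u n.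
Proof.
rewrite limn_einfE => /ereal_sup_gt [_ [N _ <-]] h.
exists N => n Nn; apply: (lt_le_trans h); apply: ereal_inf_lbound; exists n => //.
Qed.

Lemma LI_le u c : (forall N, exists2 n, (N <= n)%N & u n <= c) -> limn_einf u <= c.
Proof.
move=> h; rewrite limn_einfE; apply: ge_ereal_sup => _ [N _ <-].
have [n Nn unc] := h N; apply: le_trans unc; apply: ereal_inf_lbound; exists n => //.
Qed.

End Liminf.

Section Fatou.
Context (dd : measure_display) (T : measurableType dd) (R : realType).
Variable mu : {finite_measure set T -> \bar R}.

Lemma meas_liminf (f : (T -> \bar R)^nat) :
  (forall n, measurable_fun setT (f n)) ->
  measurable_fun setT (fun y => limn_einf (f ^~ y)).
Proof.
move=> mf.
have h : measurable_fun setT (fun y => limn_esup ((fun n y => (- f n y)%E) ^~ y)).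
  apply: measurable_fun_limn_esup => n; apply: measurableT_comp => //.
exact: (measurableT_comp _ h).
Qed.

Local Open Scope ereal_scope.
Lemma FW (G : nat -> T -> R) (h L : T -> R) (c : R) :
  (forall n, mu.-integrable setT (EFin \o G n)) ->
  mu.-integrable setT (EFin \o h) ->
  mu.-integrable setT (EFin \o L) ->
  (forall n y, - h y <= G n y)%R ->
  (forall y, 0 <= L y + h y)%R ->
  (forall y e, (0 < e)%R -> exists N, forall n, (N <= n)%N -> L y - e <= G n y)%R ->
  (forall e, (0 < e)%R -> forall N, exists2 n, (N <= n)%N &
      (\int[mu]_y (G n y)%:E <= (c + e)%:E)%E) ->
  (\int[mu]_y (L y)%:E <= c%:E)%E.
Proof.
move=> iG ih iL Gh Lh0 Lpt Gint.
have mG n : measurable_fun setT (G n).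
  by have /integrableP[/measurable_EFinP] := iG n.
have mh : measurable_fun setT h by have /integrableP[/measurable_EFinP] := ih.
have mL : measurable_fun setT L by have /integrableP[/measurable_EFinP] := iL.
pose Gh' n y := (G n y + h y)%:E.
have mGh n : measurable_fun setT (Gh' n).
  by apply/measurable_EFinP; apply: measurable_funD.
have Gh0 n y : setT y -> 0 <= Gh' n y.
  by move=> _; rewrite /Gh' lee_fin; have := Gh n y; lra.
have fat := fatou mu measurableT mGh Gh0.
have Hfin : \int[mu]_y (h y)%:E \is a fin_num.
  exact: (integrable_fin_num measurableT ih).
have Lfin : \int[mu]_y (L y)%:E \is a fin_num.
  exact: (integrable_fin_num measurableT iL).
set H := \int[mu]_y (h y)%:E in Hfin.
have GhE n : \int[mu]_y Gh' n y = \int[mu]_y (G n y)%:E + H.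
  by rewrite -(integralD_EFin measurableT (iG n) ih).
have LhE : \int[mu]_y (L y + h y)%:E = \int[mu]_y (L y)%:E + H.
  by rewrite -(integralD_EFin measurableT iL ih).
have lb : \int[mu]_y (L y + h y)%:E <= \int[mu]_y limn_einf (Gh' ^~ y).
  apply: ge0_le_integral => //.
  - by move=> y _; rewrite lee_fin.
  - by apply/measurable_EFinP; apply: measurable_funD.
  - exact: meas_liminf.
  - move=> y _; apply/lee_addgt0Pr => e e0.
    have [N hN] := Lpt y e e0.
    have : ((L y + h y) - e)%:E <= limn_einf (Gh' ^~ y).
      apply: LI_ge; exists N => n Nn; rewrite /Gh' lee_fin.
      have := hN n Nn; lra.
    move=> h1; rewrite (_ : (L y + h y)%:E = ((L y + h y - e)%:E + e%:E)).
      by apply: leeD.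
    by rewrite -EFinD subrK.
have ub : limn_einf (fun n => \int[mu]_y Gh' n y) <= (c%:E + H).
  apply/lee_addgt0Pr => e e0.
  apply: LI_le => N; have [n Nn hn] := Gint e e0 N.
  exists n => //; rewrite GhE.
  move: hn; have Ifin := integrable_fin_num measurableT (iG n).
  rewrite -(fineK Ifin) -(fineK Hfin) -!EFinD !lee_fin; lra.
have := le_trans lb (le_trans fat ub).
rewrite LhE -(fineK Hfin) -(fineK Lfin) -!EFinD !lee_fin.
lra.
Qed.

End Fatou.

Section Coercive.
Variables (R : realType) (X : pointedType) (d : X -> X -> R).
Hypothesis hd : is_metric d.
Local Notation T := (borel_d d).
Variable p : R. Hypothesis hp : 1 <= p.
Variable mu : probability T R.
Variable x0 : X.
Hypothesis hx0 : (\int[mu]_y ((d x0 y) `^ (p-1))%:E < +oo)%E.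
Local Notation F := (FF p mu x0).
Local Notation g := (gf p x0).
Local Notation mo := (mom p x0).

Lemma integral_one : (\int[mu]_y (1:R)%:E = 1)%E.
Proof.
rewrite (eq_integral (cst 1%E)) // integral_cst // mul1e.
exact: probability_setT.
Qed.

Lemma coercive : exists R0 : R, 0 <= R0 /\ forall x, R0 < d x x0 -> (0 < F x)%E.
Proof.
have hp1 : 1 <= p by [].
case: (pselect (exists R0 : R, 0 <= R0 /\ forall x, R0 < d x x0 -> (0 < F x)%E)) => // nex.
exfalso.
have hn : forall n : nat, exists x, n.+1%:R < d x x0 /\ (F x <= 0)%E.
  move=> n; apply: contrapT => hn; apply: nex; exists n.+1%:R; split => // x hx.
  rewrite ltNge; apply/negP => Fx; apply: hn; exists x; split => //.
have [xs hxs] := choice hn.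
pose c n := d (xs n) x0.
have c1 n : 1 <= c n.
  have := (hxs n).1; rewrite -/(c n) => h.
  have : 1 <= n.+1%:R :> R by rewrite ler1n.
  lra.
have c0 n : 0 < c n by have := c1 n; lra.
pose G := fun (n : nat) (y : T) => g (xs n) y * (c n)^-1.
pose h := fun y : T => 2 * p * mo y.
have iG n : mu.-integrable setT (EFin \o G n).
  have := integrableZl measurableT (c n)^-1 (int_gf hd hp hx0 (xs n)).
  apply: (eq_integrable measurableT) => y _ /=.
  by rewrite /G -EFinM mulrC.
have ih : mu.-integrable setT (EFin \o h).
  have := integrableZl measurableT (2 * p) (int_mom hd hx0).
  apply: (eq_integrable measurableT) => y _ /=.
  by rewrite /h -EFinM.
have iL : mu.-integrable setT (EFin \o (fun _ : T => (1:R))).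
  exact: finite_measure_integrable_cst.
have := @FW _ _ _ mu G h (fun _ => 1) 0 iG ih iL.
rewrite integral_one lee_fin ler10 => H; suff : false by []; apply: H.
- move=> n y; rewrite /G /h.
  have := gf_lb hd hp x0 (xs n) y; rewrite -/(c n) => hl.
  rewrite ler_pdivlMr // mulNr; lra.
- move=> y; rewrite /h; have := mom_ge0 p x0 y; have : 0 <= p by lra.
  move=> h1 h2; have : 0 <= p * mo y by apply: mulr_ge0.
  lra.
- move=> y e e0.
  set b := d x0 y.
  have b0 : 0 <= b by apply: d_ge0.
  have bp0 : 0 <= b `^ p by apply: powR_ge0.
  set K := (b + b `^ p) / e + b + 1.
  have K0 : 0 <= K.
    have : 0 <= (b + b `^ p) / e by apply: divr_ge0; lra.
    rewrite /K; lra.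
  exists (Num.bound K) => n Nn.
  have hK := archi_boundP K0.
  have hN : (Num.bound K)%:R <= n%:R :> R by rewrite ler_nat.
  have cn : n.+1%:R < c n by have := (hxs n).1.
  have hn1 : n%:R <= n.+1%:R :> R by rewrite ler_nat.
  have cK : K < c n by lra.
  have tri := d_tri hd (xs n) y x0.
  rewrite (d_sym hd y x0) -/b -/(c n) in tri.
  set a := d (xs n) y in tri.
  have be : (b + b `^ p) / e <= c n - b - 1 by rewrite /K in cK; lra.
  have a1 : 1 <= a.
    have : 0 <= (b + b `^ p) / e by apply: divr_ge0; lra.
    lra.
  have ap : a <= a `^ p by apply: le1r_powR.
  have ce : b + b `^ p <= c n * e.
    have : (b + b `^ p) / e <= c n by lra.
    by rewrite ler_pdivrMr.
  rewrite /G /g /gf -/a -/b ler_pdivlMr //.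
  have : (1 - e) * c n = c n - c n * e by ring.
  lra.
- move=> e e0 N; exists N => //.
  rewrite /G.
  rewrite (eq_integral (fun y => ((c N)^-1)%:E * (g (xs N) y)%:E)%E); last first.
    by move=> y _; rewrite -EFinM mulrC.
  rewrite integralZl //; last exact: int_gf.
  have := (hxs N).2; rewrite /FF => hF.
  rewrite add0r; apply: (@le_trans _ _ 0%E); last by rewrite lee_fin; lra.
  apply: mule_ge0_le0 => //; rewrite lee_fin invr_ge0; exact: ltW.
Qed.

End Coercive.

Lemma homo_ge (phi : nat -> nat) : {homo phi : n m / (n < m)%N} -> forall n, (n <= phi n)%N.
Proof.
move=> hphi; elim => [//|n IH]; exact: (leq_ltn_trans IH (hphi n n.+1 (ltnSn n))).
Qed.

Section Weak.
Variables (R : realType) (X : pointedType) (d : X -> X -> R).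
Hypothesis hd : is_metric d.
Local Notation T := (borel_d d).
Variable p : R. Hypothesis hp : 1 <= p.
Variable mu : probability T R.
Variable x0 : X.
Hypothesis hx0 : (\int[mu]_y ((d x0 y) `^ (p-1))%:E < +oo)%E.
Variable w : (nat -> X) -> X -> Prop.
Hypothesis hw : is_weak_convergence d w.
Local Notation F := (FF p mu x0).
Local Notation g := (@gf _ _ d p x0).
Local Notation mo := (@mom _ _ d p x0).

Lemma w_lsc u x : w u x -> forall (y : X) (e : R), 0 < e ->
  exists N, forall n, (N <= n)%N -> d x y `^ p - e <= d (u n) y `^ p.
Proof.
have hp1 : 1 <= p by [].
have p0 : 0 <= p by lra.
case: hw => _ _ W2 _ wux y e e0.
have := W2 u x wux y.
set a := d x y.
have a0 : 0 <= a by apply: d_ge0.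
have [ape|eap] := ltP (a `^ p) e.
  move=> _; exists 0%N => n _; have := powR_ge0 (d (u n) y) p; lra.
set s := a `^ p - e.
have s0 : 0 <= s by rewrite /s; lra.
set t := s `^ (p^-1).
have ts : t `^ p = s.
  by rewrite /t -powRrM mulVf ?powRr1 //; apply/eqP => h; rewrite h in hp1; lra.
have t0 : 0 <= t by apply: powR_ge0.
have ta : t < a.
  rewrite ltNge; apply/negP => hat.
  have := ge0_ler_powR p0 a0 t0 hat; rewrite ts /s; lra.
move=> hli.
have : (t%:E < limn_einf (fun n => (d (u n) y)%:E))%E.
  by apply: lt_le_trans hli; rewrite lte_fin.
move/LI_gt => [N hN]; exists N => n Nn; have := hN n Nn; rewrite lte_fin => htn.
have := ge0_ler_powR p0 t0 (d_ge0 hd (u n) y) (ltW htn); rewrite ts /s; lra.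
Qed.

Lemma w_bound u x y M : w u x -> (forall n, d (u n) y <= M) -> d x y <= M.
Proof.
case: hw => _ _ W2 _ wux hM.
have := W2 u x wux y => h.
have : ((d x y)%:E <= M%:E)%E.
  apply: le_trans h _; apply: LI_le => N; exists N => //; rewrite lee_fin; exact: hM.
by rewrite lee_fin.
Qed.

Lemma gf_lbR x y R0 : d x x0 <= R0 -> - (2 * p * R0 * mo y) <= g x y.
Proof.
have hp1 : 1 <= p by [].
move=> hR; apply: le_trans (gf_lb hd hp x0 x y).
rewrite lerN2; apply: ler_wpM2r; first exact: mom_ge0.
apply: ler_wpM2l => //; lra.
Qed.

Lemma int_momZ k : mu.-integrable setT (EFin \o (fun y : T => k * mo y)).
Proof.
have := integrableZl measurableT k (int_mom hd hx0).
by apply: (eq_integrable measurableT) => y _ /=; rewrite -EFinM.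
Qed.

Lemma FF_lb R0 x : d x x0 <= R0 ->
  - (2 * p * R0) * fine (\int[mu]_y (mo y)%:E)%E <= fine (F x).
Proof.
move=> hR.
have Mfin : (\int[mu]_y (mo y)%:E)%E \is a fin_num.
  exact: (integrable_fin_num measurableT (int_mom hd hx0)).
rewrite -lee_fin (fineK (FF_fin hd hp hx0 x)) EFinM (fineK Mfin).
rewrite -(integralZl measurableT (int_mom hd hx0)).
apply: le_integral => //.
- have := int_momZ (- (2 * p * R0)).
  by apply: (eq_integrable measurableT) => y _ /=; rewrite -EFinM.
- exact: int_gf.
- move=> y _; rewrite -EFinM lee_fin mulNr; exact: gf_lbR.
Qed.

Lemma exists_min : exists x, forall x', (F x <= F x')%E.
Proof.
have hp1 : 1 <= p by [].
have [R0 [R00 hR0]] := coercive hd hp hx0.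
pose FR x := fine (F x).
have FRE x : (FR x)%:E = F x by rewrite /FR fineK //; exact: FF_fin.
pose B := [set FR x | x in [set x | d x x0 <= R0]].
have hB : has_inf B.
  split; first by exists (FR x0); exists x0 => //=; rewrite d_xx.
  exists (- (2 * p * R0) * fine (\int[mu]_y (mo y)%:E)%E) => _ [x /= hx <-].
  exact: FF_lb.
set m := inf B.
have hn : forall n : nat, exists x, d x x0 <= R0 /\ FR x < m + n.+1%:R^-1.
  move=> n; have e0 : 0 < n.+1%:R^-1 :> R by rewrite invr_gt0 ltr0Sn.
  have [_ [x hx <-] hlt] := inf_adherent e0 hB.
  by exists x.
have [xs hxs] := choice hn.
case: hw => _ W1 _ _.
have [phi [x [hphi wx]]] : exists (phi : nat -> nat) (x : X),
    {homo phi : n m / (n < m)%N} /\ w (xs \o phi) x.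
  by apply: W1; exists x0, R0 => n; exact: (hxs n).1.
have hxR : d x x0 <= R0 by apply: (w_bound wx) => n; exact: (hxs (phi n)).1.
have key : (F x <= m%:E)%E.
  apply: (@FW _ _ _ mu (fun n => g (xs (phi n))) (fun y => 2 * p * R0 * mo y) (g x) m).
  - by move=> n; exact: int_gf.
  - exact: int_momZ.
  - exact: int_gf.
  - by move=> n y; apply: gf_lbR; exact: (hxs (phi n)).1.
  - by move=> y; have := gf_lbR y hxR; lra.
  - move=> y e e0; have [N hN] := w_lsc wx y e0.
    by exists N => n Nn; have := hN n Nn; rewrite /gf /=; lra.
  - move=> e e0 N.
    have ie0 : 0 <= e^-1 by rewrite invr_ge0; lra.
    exists (maxn N (Num.bound e^-1)); first by rewrite leq_maxl.
    set n := maxn N (Num.bound e^-1).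
    have hb := archi_boundP ie0.
    have h1 : (Num.bound e^-1 <= phi n)%N.
      by apply: leq_trans (homo_ge hphi n); rewrite leq_maxr.
    have h2 : e^-1 < (phi n).+1%:R.
      apply: (lt_le_trans hb); rewrite ler_nat; exact: leqW.
    have h3 : (phi n).+1%:R^-1 < e.
      rewrite -[e]invrK ltf_pV2 ?posrE ?invr_gt0 //; lra.
    move: (hxs (phi n)).2 => h4.
    rewrite -[X in (X <= _)%E]/(F (xs (phi n))) -FRE lee_fin.
    move: h3 h4; set q := ((phi n).+1%:R^-1 : R); lra.
exists x => x'.
have hm0 : m <= 0.
  rewrite /m; have -> : 0 = FR x0 by rewrite /FR FF0.
  by apply: (ge_inf hB.2); exists x0 => //=; rewrite d_xx.
have [hx'|hx'] := leP (d x' x0) R0.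
  apply: le_trans key _; rewrite -FRE lee_fin.
  by apply: (ge_inf hB.2); exists x'.
apply: le_trans key _; apply: le_trans (ltW (hR0 _ hx')); rewrite lee_fin //.
Qed.

End Weak.

Lemma inv_lt_of (R : realType) (e K : R) : 0 < e -> e^-1 < K -> K^-1 < e.
Proof.
move=> e0 h; have K0 : 0 < K by apply: le_lt_trans h; rewrite invr_ge0 ltW.
by rewrite -[e]invrK ltf_pV2 ?posrE ?invr_gt0.
Qed.

Section Compact.
Variables (R : realType) (X : pointedType) (d : X -> X -> R).
Hypothesis hd : is_metric d.
Local Notation T := (borel_d d).
Variable p : R. Hypothesis hp : 1 <= p.
Variable mu : probability T R.
Variable x0 : X.
Hypothesis hx0 : (\int[mu]_y ((d x0 y) `^ (p-1))%:E < +oo)%E.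
Variable w : (nat -> X) -> X -> Prop.
Hypothesis hw : is_weak_convergence d w.
Local Notation F := (FF p mu x0).
Local Notation g := (@gf _ _ d p x0).
Local Notation mo := (@mom _ _ d p x0).

Lemma Mp_F x : Mp d p mu x <-> forall x', (F x <= F x')%E.
Proof.
split => h x'.
  by have := h x'; rewrite (Wp_FF hd hp hx0) sube_le0.
by rewrite (Wp_FF hd hp hx0) sube_le0; exact: h.
Qed.

Lemma Mp_bounded : exists R0, 0 <= R0 /\ forall x, Mp d p mu x -> d x x0 <= R0.
Proof.
have [R0 [R00 hR0]] := coercive hd hp hx0.
exists R0; split => // x /Mp_F hx.
rewrite leNgt; apply/negP => /hR0 h.
have := hx x0; rewrite FF0 => h'.
by have := lt_le_trans h h'; rewrite ltxx.
Qed.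


Lemma seq_compact (u : nat -> X) : (forall n, Mp d p mu (u n)) ->
  exists (chi : nat -> nat) (x : X), {homo chi : n m / (n < m)%N} /\
    Mp d p mu x /\ (fun n => d (u (chi n)) x) @ \oo --> (0 : R).
Proof.
have hp1 : 1 <= p by [].
have p0 : 0 < p by lra.
move=> hu.
have [R0 [R00 hR0]] := Mp_bounded.
have hw' := hw; case: hw' => hconv W1 W2 W3; case: hconv => _ Wsub.
have [phi [x [hphi wx]]] : exists (phi : nat -> nat) (x : X),
    {homo phi : n m / (n < m)%N} /\ w (u \o phi) x.
  by apply: W1; exists x0, R0 => n; apply: hR0.
set v := u \o phi.
have hxR : d x x0 <= R0 by apply: (w_bound hw wx) => n; apply: hR0; apply: hu.
have hv n : Mp d p mu (v n) by apply: hu.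
set mF := F (u 0%N).
have mFfin : mF \is a fin_num by apply: FF_fin.
have Fv n : F (v n) = mF.
  apply: le_anti; apply/andP; split.
  - by move: (hv n) => /Mp_F; apply.
  - by move: (hu 0%N) => /Mp_F; apply.
set mR := fine mF.
have mRE : mR%:E = mF by rewrite /mR fineK.
have iGv n : mu.-integrable setT (EFin \o g (v n)) by exact: int_gf.
have Ghv n y : - (2 * p * R0 * mo y) <= g (v n) y.
  by apply: gf_lbR => //; apply: hR0.
have FWv (L : T -> R) : mu.-integrable setT (EFin \o L) ->
    (forall y, 0 <= L y + 2 * p * R0 * mo y) ->
    (forall y e, 0 < e -> exists N, forall n, (N <= n)%N -> L y - e <= g (v n) y) ->
    (\int[mu]_y (L y)%:E <= mR%:E)%E.
  move=> iL hL0 hLpt.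
  have Gh' : forall n y, - (2 * p * R0 * mo y) <= g (v n) y by [].
  apply: (@FW _ _ _ mu (fun n => g (v n)) (fun y => 2 * p * R0 * mo y) L mR
     iGv (int_momZ hd hx0 _) iL Gh' hL0 hLpt).
  move=> e e0 N; exists N => //.
  rewrite -[X in (X <= _)%E]/(F (v N)) Fv -mRE lee_fin; lra.
have Fx : (F x <= mF)%E.
  rewrite -mRE; apply: FWv; first exact: int_gf.
  - by move=> y; have := gf_lbR hd hp y hxR; lra.
  - move=> y e e0; have [N hN] := w_lsc hd hp hw wx y e0.
    by exists N => n Nn; have := hN n Nn; rewrite /gf /=; lra.
have Mx : Mp d p mu x.
  apply/Mp_F => x'; apply: le_trans Fx _.
  by move: (hu 0%N) => /Mp_F; apply.
have FxE : F x = mF.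
  apply: le_anti; rewrite Fx /=.
  by move: (hu 0%N) => /Mp_F; apply.
have [y hy] : exists y, forall eps, 0 < eps -> forall N, exists2 n, (N <= n)%N &
    d (v n) y < d x y + eps.
  apply: contrapT => hno.
  have H : forall y, exists k : nat, forall n, (k <= n)%N ->
      d x y + k.+1%:R^-1 <= d (v n) y.
    move=> y; apply: contrapT => hk; apply: hno; exists y => eps eps0 N.
    apply: contrapT => hn; apply: hk.
    have ie0 : 0 <= eps^-1 by rewrite invr_ge0; lra.
    exists (maxn N (Num.bound eps^-1)) => n Kn.
    have Nn : (N <= n)%N by apply: leq_trans Kn; rewrite leq_maxl.
    have h1 : d x y + eps <= d (v n) y.
      by rewrite leNgt; apply/negP => h; apply: hn; exists n.
    have hb := archi_boundP ie0.
    have h2 : eps^-1 < (maxn N (Num.bound eps^-1)).+1%:R.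
      apply: (lt_le_trans hb); rewrite ler_nat; apply: leqW; exact: leq_maxr.
    have h3 : (maxn N (Num.bound eps^-1)).+1%:R^-1 < eps.
      exact: inv_lt_of eps0 h2.
    move: h1 h3; set q := ((maxn N (Num.bound eps^-1)).+1%:R^-1 : R); lra.
  pose E (k : nat) := [set y : T | forall n, (k <= n)%N -> d x y + k.+1%:R^-1 <= d (v n) y].
  have mE k : measurable (E k).
    have -> : E k = \bigcap_n [set y : T | (k <= n)%N -> d x y + k.+1%:R^-1 <= d (v n) y].
      apply/seteqP; split => y /= h n; first by move=> _; exact: h.
      by move=> kn; apply: (h n).
    apply: bigcapT_measurable => n.
    have [kn|kn] := leqP k n.
      have mf : measurable_fun setT (fun y : T => d (v n) y - d x y).
        by apply: measurable_funB; apply: d_meas.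
      have := mf measurableT _ (measurable_itv `[k.+1%:R^-1, +oo[); rewrite setTI.
      congr measurable; apply/seteqP; split => y /=; rewrite in_itv /= andbT.
        by move=> h _; move: h; rewrite lerBrDr addrC.
      by move=> h; rewrite lerBrDr addrC; apply: h.
    rewrite [X in measurable X](_ : _ = setT) //.
    by apply/seteqP; split => // y _.

  have [k hk] : exists k, (0 < mu (E k))%E.
    apply: contrapT => hne.
    have h0 k : mu (E k) = 0%E.
      apply/eqP; rewrite eq_le measure_ge0 andbT leNgt; apply/negP => hlt.
      by apply: hne; exists k.
    have : mu.-negligible (\bigcup_k E k).
      apply: (@negligible_bigcup _ _ _ mu E) => k0; exists (E k0); split => //; exact: h0.
    move=> [N [mN muN sub]].
    have : (mu setT <= mu N)%E.
      apply: le_measure; rewrite ?inE //.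
      by move=> z _; apply: sub; have [k hk] := H z; exists k.
    by rewrite probability_setT muN lee_fin ler10.
  set del := k.+1%:R^-1 : R.
  have del0 : 0 < del by rewrite invr_gt0 ltr0Sn.
  set eta := del `^ p.
  have eta0 : 0 < eta by apply: powR_gt0.
  pose L := fun y : T => g x y + eta * \1_(E k) y.
  have ind0 y : 0 <= \1_(E k) y :> R by rewrite indicE ler0n.
  have iL : mu.-integrable setT (EFin \o L).
    have := integrableD measurableT (int_gf hd hp hx0 x)
      (integrableZl measurableT eta (integrable_indic mu (mE k))).
    by apply: (eq_integrable measurableT) => y _ /=; rewrite /L EFinD -EFinM.
  have hL0 y : 0 <= L y + 2 * p * R0 * mo y.
    have := gf_lbR hd hp y hxR; have : 0 <= eta * \1_(E k) y.
      by apply: mulr_ge0 => //; exact: ltW.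
    rewrite /L; lra.
  have hLpt : forall y e, 0 < e -> exists N, forall n, (N <= n)%N -> L y - e <= g (v n) y.
    move=> y e e0; have [yE|yE] := boolP (y \in E k).
      exists k => n kn; rewrite /L indicE yE mulr1.
      have yE' : E k y by rewrite inE in yE.
      have h1 := yE' n kn; rewrite -/del in h1.
      have a0 := d_ge0 hd x y.
      have h2 : (d x y + del) `^ p <= d (v n) y `^ p.
        by apply: ge0_ler_powR; rewrite ?nnegrE //; [lra|lra|apply: d_ge0].
      have h3 := powR_superadd hp a0 (ltW del0).
      rewrite /gf -/eta in h3 *; lra.
    have [N hN] := w_lsc hd hp hw wx y e0.
    exists N => n Nn; rewrite /L indicE (negbTE yE) mulr0 addr0.
    by have := hN n Nn; rewrite /gf /=; lra.
  have := FWv L iL hL0 hLpt.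
  have -> : (\int[mu]_y (L y)%:E = F x + eta%:E * mu (E k))%E.
    have iZ : mu.-integrable setT (EFin \o (fun y : T => eta * \1_(E k) y)).
      have := integrableZl measurableT eta (integrable_indic mu (mE k)).
      by apply: (eq_integrable measurableT) => y _ /=; rewrite EFinM.
    have hD := integralD_EFin measurableT (int_gf hd hp hx0 x) iZ.
    rewrite /= in hD.
    rewrite (eq_integral (fun y => ((g x y)%:E + (eta * \1_(E k) y)%:E)%E)); last first.
      by move=> y _; rewrite /L EFinD.
    rewrite hD; congr (_ + _)%E.
    rewrite (eq_integral (fun y => (eta%:E * (\1_(E k) y)%:E)%E)); last first.
      by move=> y _; rewrite /= EFinM.
    by rewrite integralZl ?integral_indic ?setIT //; exact: integrable_indic.
  have muEfin : mu (E k) \is a fin_num.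
    rewrite ge0_fin_numE ?measure_ge0 //; apply: le_lt_trans (probability_le1 mu (mE k)) _.
    exact: ltey.
  rewrite FxE -mRE -(fineK muEfin) -EFinM -EFinD lee_fin.
  have : 0 < fine (mu (E k)) by rewrite -lte_fin fineK.
  move=> hm h; have : 0 < eta * fine (mu (E k)) by apply: mulr_gt0.
  lra.
set a := d x y.
have hnx : forall jN : nat * nat, exists n, (jN.2 <= n)%N /\ d (v n) y < a + jN.1.+1%:R^-1.
  move=> [j N]; have e0 : 0 < j.+1%:R^-1 :> R by rewrite invr_gt0 ltr0Sn.
  by have [n Nn hn] := hy _ e0 N; exists n.
have [nx hnx'] := choice hnx.
pose psi := fix f (j : nat) : nat := if j is j'.+1 then nx (j, (f j').+1) else nx (0%N, 0%N).
have psiS j : (psi j < psi j.+1)%N := (hnx' (j.+1, (psi j).+1)).1.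
have hpsi : {homo psi : n m / (n < m)%N} := homo_ltn ltn_trans psiS.
have psiB j : d (v (psi j)) y < a + j.+1%:R^-1.
  by case: j => [|j]; exact: (hnx' _).2.
have conv : (fun j => d ((v \o psi) j) y) @ \oo --> a.
  apply/cvgrPdist_lt => e e0.
  have : ((a - e)%:E < limn_einf (fun n => (d (v n) y)%:E))%E.
    by apply: lt_le_trans (W2 v x wx y); rewrite lte_fin /a; lra.
  move/LI_gt => [N1 hN1].
  have ie0 : 0 <= e^-1 by rewrite invr_ge0; lra.
  exists (maxn N1 (Num.bound e^-1)) => // j /= Kj.
  have h1 : (N1 <= psi j)%N.
    apply: leq_trans (homo_ge hpsi j); apply: leq_trans Kj; exact: leq_maxl.
  have := hN1 _ h1; rewrite lte_fin => h2.
  have hb := archi_boundP ie0.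
  have h3 : e^-1 < j.+1%:R.
    apply: (lt_le_trans hb); rewrite ler_nat; apply: leqW; apply: leq_trans Kj; exact: leq_maxr.
  have h4 : j.+1%:R^-1 < e.
    exact: inv_lt_of e0 h3.
  have h5 := psiB j.
  rewrite ltr_norml; apply/andP; split; move: h4 h5; set q := (j.+1%:R^-1 : R); lra.
have wsub : w ((u \o phi) \o psi) x := Wsub (u \o phi) x psi hpsi wx.
have := W3 _ _ wsub (ex_intro _ y conv).
move=> hconv; exists (phi \o psi), x; split; last by split.
by move=> n m nm; apply: hphi; apply: hpsi.
Qed.

End Compact.

Section SeqCompact.
Variables (R : realType) (X : pointedType) (d : X -> X -> R).
Hypothesis hd : is_metric d.

Lemma seqc_compact (K : set X) : d_separable d ->
  (forall u : nat -> X, (forall n, K (u n)) -> exists (chi : nat -> nat) (x : X),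
     {homo chi : n m / (n < m)%N} /\ K x /\ (fun n => d (u (chi n)) x) @ \oo --> (0 : R)) ->
  d_compact d K.
Proof.
move=> [D [cD dD]] hseq I U hU hK.
case: (pselect (K !=set0)) => [[z Kz]|K0]; last first.
  by exists set0 => // x Kx; exfalso; apply: K0; exists x.
have [i0 _ _] := hK z Kz.
move/pcard_surjP: cD => [e he].
pose good n k := exists i, dball d (e n) (k.+1%:R^-1) `<=` U i.
pose idx n k : I := if pselect (good n k) is left h then projT1 (cid h) else i0.
have idxP n k : good n k -> dball d (e n) (k.+1%:R^-1) `<=` U (idx n k).
  rewrite /idx; case: pselect => // h _; exact: (projT2 (cid h)).
have cover x : K x -> exists n k, good n k /\ dball d (e n) (k.+1%:R^-1) x.
  move=> Kx; have [i _ Uix] := hK x Kx.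
  have [r r0 hr] := hU i x Uix.
  have ir0 : 0 <= 2 / r by apply: divr_ge0; lra.
  set k := Num.bound (2 / r).
  have hb := archi_boundP ir0.
  set del := k.+1%:R^-1 : R.
  have del0 : 0 < del by rewrite invr_gt0 ltr0Sn.
  have h2 : 2 * del < r.
    have r2 : 0 < r / 2 by lra.
    have h3 : (r / 2)^-1 < k.+1%:R.
      by rewrite invf_div; apply: (lt_le_trans hb); rewrite ler_nat.
    have := inv_lt_of r2 h3; rewrite -/del; lra.
  have [q Dq xq] := dD x del del0.
  have [n _ enq] := he q Dq.
  exists n, k; split; last by rewrite /dball /= enq (d_sym hd).
  exists i => y; rewrite /dball /= enq => qy; apply: hr; rewrite /dball /=.
  have := d_tri hd x q y; move: qy; rewrite -/del; lra.
have [N covN] : exists N, forall x, K x -> exists n k, [/\ (n <= N)%N, (k <= N)%N &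
    U (idx n k) x].
  apply: contrapT => hno.
  have hx : forall N, exists x, K x /\ forall n k, (n <= N)%N -> (k <= N)%N -> ~ U (idx n k) x.
    move=> N; apply: contrapT => hN; apply: hno; exists N => x Kx.
    apply: contrapT => hnx; apply: hN; exists x; split => // n k nN kN Ux.
    by apply: hnx; exists n, k; split.
  have [xs hxs] := choice hx.
  have [chi [x [hchi [Kx cvx]]]] := hseq xs (fun n => (hxs n).1).
  have [n [k [gnk xnk]]] := cover x Kx.
  set del := k.+1%:R^-1 : R.
  have del' : 0 < del - d (e n) x by move: xnk; rewrite /dball /= -/del; lra.
  move/cvgrPdist_lt : cvx => /(_ _ del') [M _ hM].
  set j := maxn M (maxn n k).
  have hj := hM j (leq_maxl _ _).
  rewrite /= sub0r normrN ger0_norm in hj; last exact: d_ge0.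
  have jc := homo_ge hchi j.
  have nj : (n <= chi j)%N.
    by apply: leq_trans jc; apply: leq_trans (leq_maxr _ _); apply: leq_maxl.
  have kj : (k <= chi j)%N.
    by apply: leq_trans jc; apply: leq_trans (leq_maxr _ _); apply: leq_maxr.
  apply: ((hxs (chi j)).2 n k nj kj); apply: (idxP n k gnk).
  rewrite /dball /=; have := d_tri hd (e n) x (xs (chi j)).
  rewrite (d_sym hd x (xs (chi j))) -/del; lra.
exists ((fun nk : nat * nat => idx nk.1 nk.2) @` (`I_N.+1 `*` `I_N.+1)).
  exact/finite_image/finite_setX; exact: finite_II.
move=> x Kx; have [n [k [nN kN Ux]]] := covN x Kx.
exists (idx n k) => //; exists (n, k) => //.
Qed.

End SeqCompact.

Unset Implicit Arguments.
Theorem corollary3p10 (R : realType) (X : pointedType) (d : X -> X -> R)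
  (hd : is_metric d) (hsep : d_separable d) (hw : admits_weak_convergence d)
  (p : R) (hp : 1 <= p) (mu : probability (borel_d d) R)
  (hmu : finite_moment d (p - 1) mu) :
  Mp d p mu !=set0 /\ d_compact d (Mp d p mu).
Proof.
have [x0 hx0] := hmu.
have [w hw'] := hw.
split.
  have [x hx] := exists_min hd hp hx0 hw'.
  by exists x; apply/(Mp_F hd hp hx0).
apply: seqc_compact => // u hu.
have [chi [x [h1 [h2 h3]]]] := seq_compact hd hp hx0 hw' hu.
exists chi, x; split => //; split => //.
Qed.
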